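(* The element $g_{-1}(x):=x-2$ lies in $\mathcal{F}_{-1}$ and is invertible in $\mathbb{K}[[x]]$, and the $\mathbb{Z}$-graded algebra $\mathcal{F}=\bigoplus_{r\in\mathbb{Z}}\mathcal{F}_r$ is isomorphic to the algebra $\mathcal{F}_0[T,T^{-1}]$ of Laurent polynomials in a variable $T$ of degree $-1$ with coefficients in $\mathcal{F}_0$, via the map sending $\rho\,T^{j}$ ($\rho\in\mathcal{F}_0$, $j\in\mathbb{Z}$) to $\rho(x)(x-2)^{j}\in\mathcal{F}_{-j}$.
   Context: $\mathbb{K}$ is one of $\mathbb{Q},\mathbb{R},\mathbb{C}$. For $r\in\mathbb{Z}$, $\mathcal{F}_r\subset\mathbb{K}[[x]]$ is the space of formal power series $\varphi$ with $\varphi(x/(x-1))=(1-x)^r\varphi(x)$. $\mathcal{F}=\bigoplus_r\mathcal{F}_r$ is the $\mathbb{Z}$-graded algebra with homogeneous components $\mathcal{F}_r$ and multiplication given on homogeneous elements by the Cauchy product (which maps $\mathcal{F}_r\times\mathcal{F}_s$ into $\mathcal{F}_{r+s}$). *)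

(* Defs.v *)
From mathcomp Require Import all_boot all_order all_algebra.
From mathcomp Require Import complex Rstruct.
Set Implicit Arguments. Unset Strict Implicit. Unset Printing Implicit Defensive.
Import Order.TTheory GRing.Theory Num.Theory.
Local Open Scope ring_scope.

Inductive Kchoice := KQ | KR | KC.

Definition Kfield (k : Kchoice) : fieldType :=
  match k with
  | KQ => rat
  | KR => Rdefinitions.R
  | KC => (Rdefinitions.R)[i]%C
  end.

Section Series.
Variable K : fieldType.

Definition series := nat -> K.

Definition szero : series := fun _ => 0.
Definition sone : series := fun n => if n == 0%N then 1 else 0.
Definition sX : series := fun n => if n == 1%N then 1 else 0.
Definition sC (c : K) : series := fun n => if n == 0%N then c else 0.
Definition sadd (f g : series) : series := fun n => f n + g n.
Definition sopp (f : series) : series := fun n => - f n.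
Definition sscale (c : K) (f : series) : series := fun n => c * f n.
Definition smul (f g : series) : series :=
  fun n => \sum_(i < n.+1) f i * g (n - i)%N.
Definition spow (f : series) (k : nat) : series := iter k (smul f) sone.

(* Multiplicative inverse of a series with nonzero constant term:
   b_0 = 1/f_0, b_(n+1) = -(1/f_0) * sum_(i=1)^(n+1) f_i b_(n+1-i). *)
Fixpoint sinv_list (f : series) (n : nat) : seq K :=
  match n with
  | 0%N => [:: (f 0%N)^-1]
  | m.+1 => let l := sinv_list f m in
      rcons l (- (f 0%N)^-1 * \sum_(i < m.+1) f i.+1 * nth 0 l (m - i)%N)
  end.
Definition sinv (f : series) : series := fun n => nth 0 (sinv_list f n) n.

(* Integer powers (for r < 0 this is the inverse of f^|r|). *)
Definition spowz (f : series) (r : int) : series :=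
  match r with
  | Posz n => spow f n
  | Negz n => sinv (spow f n.+1)
  end.

(* Composition f(s) for a series s with zero constant term:
   coefficient n is sum_(k <= n) f_k [x^n] s^k. *)
Definition scomp (f s : series) : series :=
  fun n => \sum_(k < n.+1) f k * spow s k n.

Definition sMoeb : series := smul sX (sinv (sadd sX (sopp sone))).
Definition s1mX : series := sadd sone (sopp sX).

Definition inF (r : int) (phi : series) : Prop :=
  scomp phi sMoeb = smul (spowz s1mX r) phi.

Definition gm1 : series := sadd sX (sC (-2)).

Definition zfam := int -> series.

Definition supported_in (N : nat) (f : zfam) : Prop :=
  forall r : int, (N < `|r|)%N -> f r = szero.
Definition fin_supp (f : zfam) : Prop := exists N, supported_in N f.

Definition graded_elt (f : zfam) : Prop :=
  fin_supp f /\ forall r, inF r (f r).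
(* Elements of F_0[T,T^-1] : c j is the coefficient of T^j, in F_0. *)
Definition laurent_elt (c : zfam) : Prop :=
  fin_supp c /\ forall j, inF 0 (c j).

Definition fadd (f g : zfam) : zfam := fun r => sadd (f r) (g r).
Definition fscale (a : K) (f : zfam) : zfam := fun r => sscale a (f r).
Definition fone : zfam := fun r => if r == 0 then sone else szero.
(* Product (convolution over Z); for families supported in [-N,N] this is
   exactly the product in the graded algebra / Laurent polynomial ring. *)
Definition fconv (N : nat) (f g : zfam) : zfam :=
  fun r n => \sum_(i < (2 * N).+1)
    smul (f (i%:Z - N%:Z)) (g (r - (i%:Z - N%:Z))) n.

Definition Phi (c : zfam) : zfam :=
  fun r => smul (c (- r)) (spowz gm1 (- r)).

End Series.

(* Main.v *)
From HB Require Import structures.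
Require Import Defs.
From mathcomp Require Import all_boot all_order all_algebra.
From mathcomp Require Import boolp zify ring.

Import GRing.Theory Num.Theory.
Local Open Scope ring_scope.

Section S.
Context {K : fieldType}.
Local Notation ser := (series K).

Lemma sext (f g : ser) : (forall n, f n = g n) -> f = g.
Proof. move=> h; exact: functional_extensionality_dep. Qed.

Definition tr (n : nat) (f : ser) : {poly K} := \poly_(i < n.+1) f i.
Definition eqlow n (p q : {poly K}) := forall i, (i <= n)%N -> p`_i = q`_i.

Lemma coef_tr n f i : (i <= n)%N -> (tr n f)`_i = f i.
Proof. by move=> h; rewrite coef_poly ltnS h. Qed.

Lemma eqlow_trans {n p q r} : eqlow n p q -> eqlow n q r -> eqlow n p r.
Proof. by move=> a b i hi; rewrite a // b. Qed.
Lemma eqlow_sym {n p q} : eqlow n p q -> eqlow n q p.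
Proof. by move=> a i hi; rewrite a. Qed.

Lemma eqlowM {n p p' q q'} : eqlow n p p' -> eqlow n q q' -> eqlow n (p * q) (p' * q').
Proof.
move=> a b i hi; rewrite !coefM; apply: eq_bigr => j _.
have hj : (j <= n)%N by apply: leq_trans hi; rewrite -ltnS.
by rewrite a // b // (leq_trans (leq_subr _ _) hi).
Qed.

Lemma tr_mul n f g : eqlow n (tr n (smul f g)) (tr n f * tr n g).
Proof.
move=> i hi; rewrite coef_tr // coefM /smul; apply: eq_bigr => j _.
have hj : (j <= n)%N by apply: leq_trans hi; rewrite -ltnS.
by rewrite !coef_tr // (leq_trans (leq_subr _ _) hi).
Qed.

Lemma tr_add n f g : eqlow n (tr n (sadd f g)) (tr n f + tr n g).
Proof. by move=> i hi; rewrite coefD !coef_tr. Qed.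

Lemma eqlow_eq f g : (forall n, eqlow n (tr n f) (tr n g)) -> f = g.
Proof. move=> h; apply: sext => n; by have := h n n (leqnn n); rewrite !coef_tr. Qed.

Lemma eqlow_eq2 {f g} (P : nat -> {poly K}) :
  (forall n, eqlow n (tr n f) (P n)) -> (forall n, eqlow n (tr n g) (P n)) -> f = g.
Proof. move=> a b; apply: eqlow_eq => n; exact: eqlow_trans (a n) (eqlow_sym (b n)). Qed.

Lemma eqlow_refl n p : eqlow n p p. Proof. by []. Qed.

Lemma smulA : associative (@smul K).
Proof.
move=> f g h; apply: (eqlow_eq2 (fun n => tr n f * tr n g * tr n h)) => n.
  rewrite -mulrA; apply: eqlow_trans (tr_mul _ _ _) _.
  exact: eqlowM (eqlow_refl _ _) (tr_mul _ _ _).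
apply: eqlow_trans (tr_mul _ _ _) _.
exact: eqlowM (tr_mul _ _ _) (eqlow_refl _ _).
Qed.

Lemma smulC : commutative (@smul K).
Proof.
move=> f g; apply: (eqlow_eq2 (fun n => tr n f * tr n g)) => n.
  exact: tr_mul.
rewrite mulrC; exact: tr_mul.
Qed.

Lemma tr1 n : tr n (sone K) = 1.
Proof.
apply/polyP => i; rewrite coef_poly coef1 /sone.
case: i => [|i]; first by rewrite ltn0Sn.
by case: ifP.
Qed.

Lemma smul1 : left_id (sone K) (@smul K).
Proof.
move=> f; apply: eqlow_eq => n.
apply: eqlow_trans (tr_mul _ _ _) _; by rewrite tr1 mul1r.
Qed.

Lemma smulDl : left_distributive (@smul K) (@sadd K).
Proof.
move=> f g h; apply: (eqlow_eq2 (fun n => tr n f * tr n h + tr n g * tr n h)) => n.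
  apply: eqlow_trans (tr_mul _ _ _) _; rewrite -mulrDl.
  exact: eqlowM (tr_add _ _ _) (eqlow_refl _ _).
apply: eqlow_trans (tr_add _ _ _) _.
by move=> i hi; rewrite !coefD (tr_mul _ _ _ _ hi) (tr_mul _ _ _ _ hi).
Qed.

Lemma saddA : associative (@sadd K).
Proof. by move=> f g h; apply: sext => n; rewrite /sadd addrA. Qed.
Lemma saddC : commutative (@sadd K).
Proof. by move=> f g; apply: sext => n; rewrite /sadd addrC. Qed.
Lemma sadd0 : left_id (szero K) (@sadd K).
Proof. by move=> f; apply: sext => n; rewrite /sadd /szero add0r. Qed.
Lemma saddN : left_inverse (szero K) (@sopp K) (@sadd K).
Proof. by move=> f; apply: sext => n; rewrite /sadd /sopp /szero addNr. Qed.

End S.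

HB.instance Definition _ (K : fieldType) := gen_eqMixin (series K).
HB.instance Definition _ (K : fieldType) := gen_choiceMixin (series K).
HB.instance Definition _ (K : fieldType) :=
  GRing.isZmodule.Build (series K) (@saddA K) (@saddC K) (@sadd0 K) (@saddN K).

Lemma one_neq0 (K : fieldType) : sone K != szero K.
Proof.
apply/eqP => h; have := congr1 (fun f => f 0%N) h; rewrite /sone /szero /=.
by move/eqP; rewrite oner_eq0.
Qed.

HB.instance Definition _ (K : fieldType) :=
  GRing.Zmodule_isComNzRing.Build (series K) (@smulA K) (@smulC K) (@smul1 K) (@smulDl K) (@one_neq0 K).

Section U.
Context {K : fieldType}.
Local Notation ser := (series K).

Lemma smulE (f g : ser) : smul f g = f * g. Proof. by []. Qed.
Lemma saddE (f g : ser) : sadd f g = f + g. Proof. by []. Qed.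
Lemma soppE (f : ser) : sopp f = - f. Proof. by []. Qed.
Lemma soneE : sone K = 1. Proof. by []. Qed.
Lemma szeroE : szero K = 0. Proof. by []. Qed.

Lemma coefMs (f g : ser) n : (f * g) n = \sum_(i < n.+1) f i * g (n - i)%N.
Proof. by []. Qed.
Lemma coefDs (f g : ser) n : (f + g) n = f n + g n. Proof. by []. Qed.
Lemma coefNs (f : ser) n : (- f) n = - f n. Proof. by []. Qed.
Lemma coef0s n : (0 : ser) n = 0. Proof. by []. Qed.
Lemma coef1s n : (1 : ser) n = if n == 0%N then 1 else 0. Proof. by []. Qed.
Lemma coefM0 (f g : ser) : (f * g) 0%N = f 0%N * g 0%N.
Proof. by rewrite coefMs big_ord1. Qed.

Lemma size_sinv_list (f : ser) n : size (sinv_list f n) = n.+1.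
Proof. by elim: n => //= n ih; rewrite size_rcons ih. Qed.

Lemma nth_sinv_list (f : ser) n i : (i <= n)%N -> nth 0 (sinv_list f n) i = sinv f i.
Proof.
elim: n => [|n ih] hi.
  by move: hi; rewrite leqn0 => /eqP ->.
rewrite /= nth_rcons size_sinv_list.
case: ltnP => h; first by rewrite ih.
have -> : i = n.+1 by apply/eqP; rewrite eqn_leq hi h.
by rewrite eqxx /sinv /= nth_rcons size_sinv_list ltnn eqxx.
Qed.

Lemma sinvS (f : ser) m :
  sinv f m.+1 = - (f 0%N)^-1 * \sum_(i < m.+1) f i.+1 * sinv f (m - i)%N.
Proof.
rewrite /sinv /= nth_rcons size_sinv_list ltnn eqxx; congr (_ * _).
by apply: eq_bigr => i _; rewrite nth_sinv_list // leq_subr.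
Qed.

Lemma smul_sinv (f : ser) : f 0%N != 0 -> f * sinv f = 1.
Proof.
move=> f0; apply: sext => -[|m].
  by rewrite coefM0 /sinv /= divff.
rewrite coefMs big_ord_recl subn0 sinvS coef1s /=.
set S := (X in _ * (_ * X) + _).
have -> : \sum_(i < m.+1) f (bump 0 i) * sinv f (m.+1 - bump 0 i)%N = S.
  by apply: eq_bigr => i _; rewrite /bump /= add1n subSS.
by rewrite mulrA mulrN divff // mulN1r addNr.
Qed.

Definition sunit : {pred ser} := fun f => f 0%N != 0.
Definition sinvr (f : ser) : ser := if f 0%N != 0 then sinv f else f.

Lemma smulVx : {in sunit, left_inverse 1 sinvr *%R}.
Proof. move=> f hf; have h : f 0%N != 0 := hf; by rewrite /sinvr h mulrC smul_sinv. Qed.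

Lemma sunitPl (x y : ser) : y * x = 1 -> sunit x.
Proof.
move=> h; have := congr1 (fun f : ser => f 0%N) h; rewrite coefM0 coef1s /= => e.
rewrite /sunit; apply/eqP => x0; move: e; rewrite x0 mulr0 => /eqP; by rewrite eq_sym oner_eq0.
Qed.

Lemma sinvr_out : {in [predC sunit], sinvr =1 id}.
Proof. move=> f hf; have h : (f 0%N != 0) = false by apply: negbTE. by rewrite /sinvr h. Qed.

End U.

HB.instance Definition _ (K : fieldType) :=
  GRing.ComNzRing_hasMulInverse.Build (series K) (@smulVx K) (@sunitPl K) (@sinvr_out K).

Section V.
Context {K : fieldType}.
Local Notation ser := (series K).

Lemma sunitE (f : ser) : (f \is a GRing.unit) = (f 0%N != 0). Proof. by []. Qed.
Lemma sinvE (f : ser) : f 0%N != 0 -> sinv f = f^-1.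
Proof. by move=> h; rewrite /GRing.inv /= /sinvr h. Qed.

End V.

Section W.
Context {K : fieldType}.
Local Notation ser := (series K).

Lemma spowE (f : ser) n : spow f n = f ^+ n.
Proof. elim: n => // n ih; by rewrite exprS -ih. Qed.

Lemma spow_tr (s : ser) n k i : (i <= n)%N -> spow s k i = ((tr n s) ^+ k)`_i.
Proof.
elim: k i => [|k ih] i hi.
  by rewrite expr0 coef1 /= /sone; case: i {hi}.
rewrite exprS coefM /= smulE coefMs; apply: eq_bigr => j _.
have hj : (j <= n)%N by apply: leq_trans hi; rewrite -ltnS.
by rewrite coef_tr // ih // (leq_trans (leq_subr _ _) hi).
Qed.

Lemma spow_low (s : ser) k i : s 0%N = 0 -> (i < k)%N -> spow s k i = 0.
Proof.
move=> s0; elim: k i => [|k ih] i // hi.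
rewrite /= smulE coefMs big1 // => -[[|j] hj] _ /=; first by rewrite s0 mul0r.
by rewrite ih ?mulr0 //; lia.
Qed.

End W.

Section X.
Context {K : fieldType}.
Local Notation ser := (series K).

Lemma widen_sum (F : nat -> K) a b : (a <= b)%N ->
  (forall k, (a <= k)%N -> (k < b)%N -> F k = 0) ->
  \sum_(k < b) F k = \sum_(k < a) F k.
Proof.
move=> hab hF; rewrite (big_ord_widen b F hab) [in RHS]big_mkcond /=.
apply: eq_bigr => k _; case: ifP => // /negbT; rewrite -leqNgt => h.
by rewrite hF.
Qed.

Lemma comp_tr (f s : ser) (p : {poly K}) n : s 0%N = 0 ->
  (forall k, (k <= n)%N -> p`_k = f k) ->
  eqlow n (tr n (scomp f s)) (p \Po tr n s).
Proof.
move=> s0 hp i hi; rewrite coef_tr // coef_comp_poly /scomp.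
set M := maxn (size p) n.+1.
have hF : forall k, p`_k * ((tr n s) ^+ k)`_i = f k * spow s k i.
  move=> k; rewrite -spow_tr //; case: (leqP k i) => hk.
    by rewrite hp // (leq_trans hk hi).
  by rewrite spow_low // !mulr0.
rewrite -(@widen_sum (fun k => p`_k * ((tr n s) ^+ k)`_i) _ M); last first.
- by move=> k hk _; rewrite nth_default // mul0r.
- by rewrite leq_maxl.
rewrite -(@widen_sum (fun k => f k * spow s k i) _ M); last first.
- by move=> k hk _; rewrite spow_low // mulr0.
- by rewrite (leq_trans _ (leq_maxr _ _)).
by apply: eq_bigr => k _; rewrite hF.
Qed.

Lemma scompM (f g s : ser) : s 0%N = 0 -> scomp (f * g) s = scomp f s * scomp g s.
Proof.
move=> s0.
apply: (eqlow_eq2 (fun n => (tr n f * tr n g) \Po tr n s)) => n.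
  apply: comp_tr => // k hk; by rewrite -(tr_mul n f g k hk) coef_tr.
apply: eqlow_trans (tr_mul _ _ _) _; rewrite comp_polyM.
apply: eqlowM; apply: comp_tr => // k hk; exact: coef_tr.
Qed.

Lemma scomp1 (s : ser) : scomp 1 s = 1.
Proof.
apply: sext => n; rewrite /scomp big_ord_recl /= big1 ?addr0.
  by rewrite coef1s /= mul1r.
by move=> i _; rewrite coef1s /= mul0r.
Qed.

Lemma scompV (f s : ser) : s 0%N = 0 -> f \is a GRing.unit ->
  scomp (f^-1) s = (scomp f s)^-1.
Proof.
move=> s0 fu.
have h : scomp (f^-1) s * scomp f s = 1 by rewrite -scompM // mulVr // scomp1.
have bu : scomp f s \is a GRing.unit by apply/unitrP; exists (scomp f^-1 s); rewrite h mulrC h.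
by rewrite -[LHS]mulr1 -(mulrV bu) mulrA h mul1r.
Qed.

End X.

Section Y.
Context {K : fieldType}.
Local Notation ser := (series K).

Lemma spowzE (f : ser) z : f \is a GRing.unit -> spowz f z = f ^ z.
Proof.
move=> fu; case: z => n /=; first by rewrite spowE.
rewrite spowE sinvE smulE -?exprS //; rewrite -sunitE; exact: unitrX.
Qed.

Lemma s1mXE : s1mX K = 1 - sX K. Proof. by []. Qed.
Lemma s1mX_unit : s1mX K \is a GRing.unit.
Proof. by rewrite sunitE /s1mX /sadd /sopp /sone /sX /= subr0 oner_eq0. Qed.

Lemma sMoeb0 : sMoeb K 0%N = 0.
Proof. by rewrite /sMoeb smulE coefM0 /sX /= mul0r. Qed.

Lemma inFE r (phi : ser) : inF r phi <-> scomp phi (sMoeb K) = s1mX K ^ r * phi.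
Proof. by rewrite /inF smulE spowzE //; exact: s1mX_unit. Qed.

Lemma inF_mul a b (f g : ser) : inF a f -> inF b g -> inF (a + b) (f * g).
Proof.
rewrite !inFE => ha hb; rewrite scompM ?sMoeb0 // ha hb exprzDr ?s1mX_unit //.
by rewrite mulrACA.
Qed.

Lemma inF_inv a (f : ser) : f \is a GRing.unit -> inF a f -> inF (- a) (f^-1).
Proof.
move=> fu; rewrite !inFE => ha; rewrite scompV ?sMoeb0 // ha.
by rewrite invrM ?unitrXz ?s1mX_unit // invr_expz mulrC.
Qed.

Lemma inF_one : inF 0 (1 : ser).
Proof. by rewrite inFE scomp1 expr0z mul1r. Qed.

Lemma inF_zero r : inF r (0 : ser).
Proof.
rewrite inFE mulr0; apply: sext => n; rewrite /scomp big1 // => i _.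
by rewrite mul0r.
Qed.

Lemma sC_m2 : sC (-2) = - (1 + 1) :> ser.
Proof. by apply: sext => -[|n]; rewrite /sC /= coefNs coefDs coef1s /=; [ring | rewrite addr0 oppr0]. Qed.

Lemma gm1E : gm1 K = sX K - (1 + 1).
Proof. by rewrite /gm1 saddE sC_m2. Qed.

Lemma scomp_gm1 (s : ser) : s 0%N = 0 -> scomp (gm1 K) s = sadd s (sC (-2)).
Proof.
move=> s0; apply: sext => -[|n].
  by rewrite /scomp big_ord1 /gm1 /sadd /sX /sC /sone /= s0 add0r mulr1.
rewrite /scomp big_ord_recl big_ord_recl big1; last first.
  move=> i _; rewrite /gm1 /sadd /sX /sC /=; by rewrite addr0 mul0r.
rewrite /gm1 /sadd /sX /sC /=.
by rewrite smulE mulr1 (_ : sone K n.+1 = 0) // mulr0 !add0r !addr0 mul1r.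
Qed.

Lemma inF_gm1 : inF (-1) (gm1 K).
Proof.
rewrite inFE scomp_gm1 ?sMoeb0 // saddE sC_m2 gm1E s1mXE.
set w := sX K - 1.
have wu : w \is a GRing.unit.
  by rewrite sunitE /w coefDs coefNs coef1s /sX /= sub0r oppr_eq0 oner_eq0.
have hs : sMoeb K = (w + 1) * w^-1.
  by rewrite /sMoeb smulE sinvE -?sunitE // /w subrK.
have e1 : sX K = w + 1 by rewrite /w subrK.
rewrite hs e1 -/w.
have e2 : 1 - (w + 1) = - w by ring.
rewrite e2 exprN1 invrN [RHS]mulrC.
apply: (@mulIr _ (- w)); first by rewrite unitrN.
apply/eqP; rewrite -subr_eq0.
have -> : ((w + 1) / w - (1 + 1)) * - w - (w + 1 - (1 + 1)) * - w^-1 * - w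
  = (1 - w^-1 * w) * ((1 + 1) * w) by ring.
by rewrite mulVr // subrr mul0r.
Qed.

End Y.

Section Z.
Context {K : fieldType}.
Local Notation ser := (series K).
Hypothesis h2 : (2 : K) != 0.

Lemma zext (f g : zfam K) : (forall r, f r = g r) -> f = g.
Proof. move=> h; exact: functional_extensionality_dep. Qed.

Lemma gm1_unit : gm1 K \is a GRing.unit.
Proof. by rewrite sunitE /gm1 /sadd /sX /sC /= add0r oppr_eq0. Qed.

Lemma inF_gpown (n : nat) : inF (- n%:Z) (gm1 K ^+ n).
Proof.
elim: n => [|n ih]; first by rewrite expr0 oppr0; exact: inF_one.
rewrite exprS; have := inF_mul _ _ _ _ inF_gm1 ih.
by rewrite (_ : -1 + - n%:Z = - n.+1%:Z) //; lia.
Qed.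

Lemma inF_gpow (j : int) : inF (- j) (gm1 K ^ j).
Proof.
case: j => n; first exact: inF_gpown.
have := inF_inv _ _ (unitrX n.+1 gm1_unit) (inF_gpown n.+1).
by rewrite NegzE opprK.
Qed.
End Z.

Section Main.
Context {K : fieldType}.
Local Notation ser := (series K).
Hypothesis h2 : (2 : K) != 0.

Lemma PhiE (c : zfam K) r : Phi c r = c (- r) * gm1 K ^ (- r).
Proof. by rewrite /Phi smulE spowzE // gm1_unit. Qed.

Lemma coef_sum_s (I : Type) (r : seq I) (P : pred I) (F : I -> ser) n :
  (\sum_(i <- r | P i) F i) n = \sum_(i <- r | P i) F i n.
Proof. by elim/big_rec2: _ => // i y1 y2 _ ih; rewrite coefDs ih. Qed.

Lemma fconvE N (c d : zfam K) x :
  fconv N c d x = \sum_(i < (2 * N).+1) c (i%:Z - N%:Z) * d (x - (i%:Z - N%:Z)).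
Proof. by apply: sext => n; rewrite coef_sum_s. Qed.

Lemma main_gen :
  inF (-1) (gm1 K) /\
  (exists h : series K, smul (gm1 K) h = sone K) /\
  (forall c : zfam K, laurent_elt c -> graded_elt (Phi c)) /\
  (forall c d : zfam K, laurent_elt c -> laurent_elt d ->
     Phi c = Phi d -> c = d) /\
  (forall f : zfam K, graded_elt f ->
     exists c : zfam K, laurent_elt c /\ Phi c = f) /\
  (forall c d : zfam K, Phi (fadd c d) = fadd (Phi c) (Phi d)) /\
  (forall (a : K) (c : zfam K), Phi (fscale a c) = fscale a (Phi c)) /\
  Phi (fone K) = fone K /\
  (forall (N : nat) (c d : zfam K), laurent_elt c -> laurent_elt d ->
     supported_in N c -> supported_in N d ->
     Phi (fconv N c d) = fconv N (Phi c) (Phi d)).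
Proof.
have gu := gm1_unit h2.
split; first exact: inF_gm1.
split; first by exists (gm1 K)^-1; rewrite smulE mulrV.
split.
  move=> c [[N hN] hc]; split.
    exists N => r hr; rewrite PhiE hN ?mul0r // abszN //.
  move=> r; rewrite PhiE; have := inF_mul _ _ _ _ (hc (- r)) (inF_gpow h2 (- r)).
  by rewrite opprK add0r.
split.
  move=> c d _ _ e; apply: zext => j.
  have := congr1 (fun f => f (- j)) e; rewrite !PhiE opprK.
  by apply: mulIr; apply: unitrXz.
split.
  move=> f [[N hN] hf]; exists (fun j => f (- j) * gm1 K ^ (- j)); split.
    split.
      exists N => r hr; rewrite hN ?mul0r // abszN //.
    move=> j; have := inF_mul _ _ _ _ (hf (- j)) (inF_gpow h2 (- j)).
    by rewrite opprK addrC subrr.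
  apply: zext => r; rewrite PhiE !opprK -mulrA -exprzDr // subrr expr0z mulr1 //.
split.
  by move=> c d; apply: zext => r; rewrite /fadd !PhiE saddE mulrDl.
split.
  move=> a c; apply: zext => r; rewrite /fscale !PhiE; apply: sext => n.
  rewrite /sscale !coefMs mulr_sumr; apply: eq_bigr => i _; by rewrite mulrA.
split.
  apply: zext => r; rewrite PhiE /fone oppr_eq0; case: ifP => [/eqP -> | _].
    by rewrite oppr0 expr0z soneE mul1r.
  by rewrite szeroE mul0r.
move=> N c d _ _ _ _; apply: zext => r.
rewrite PhiE !fconvE mulr_suml [RHS](reindex_inj rev_ord_inj) /=.
apply: eq_bigr => i _.
have ea : (((2 * N).+1 - i.+1)%N%:Z - N%:Z) = - (i%:Z - N%:Z).
  have := ltn_ord i; lia.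
rewrite ea !PhiE !opprK.
set a := (i%:Z - N%:Z).
rewrite (_ : - (r + a) = - r - a); last by ring.
rewrite [RHS]mulrACA -exprzDr // (_ : a + (- r - a) = - r) //; ring.
Qed.


End Main.

From mathcomp Require Import complex Rstruct.

Lemma two_neq0 (k : Kchoice) : (2 : Kfield k) != 0.
Proof.
case: k => /=.
- by [].
- by rewrite pnatr_eq0.
- by rewrite pnatr_eq0.
Qed.

Theorem theorem3p4 (k : Kchoice) :
  let F := Kfield k in
  inF (-1) (gm1 F) /\
  (exists h : series F, smul (gm1 F) h = sone F) /\
  (forall c : zfam F, laurent_elt c -> graded_elt (Phi c)) /\
  (forall c d : zfam F, laurent_elt c -> laurent_elt d ->
     Phi c = Phi d -> c = d) /\
  (forall f : zfam F, graded_elt f ->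
     exists c : zfam F, laurent_elt c /\ Phi c = f) /\
  (forall c d : zfam F, Phi (fadd c d) = fadd (Phi c) (Phi d)) /\
  (forall (a : F) (c : zfam F), Phi (fscale a c) = fscale a (Phi c)) /\
  Phi (fone F) = fone F /\
  (forall (N : nat) (c d : zfam F), laurent_elt c -> laurent_elt d ->
     supported_in N c -> supported_in N d ->
     Phi (fconv N c d) = fconv N (Phi c) (Phi d)).
Proof. move=> F; exact: (main_gen (two_neq0 k)). Qed.
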